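(* Let $q$ be a prime power, $t$ an integer with $2\le t<q$, and $d$ a non-negative integer. Then there exists an $\left(\left\lfloor \frac{q-d}{t-1}\right\rfloor;d\right)$-CFF$(q^2+q,\,q^t)$.
   Context: A set system $(X,\mathcal F)$ (a finite point set $X$ and a set $\mathcal F$ of subsets called blocks) is an $(r;d)$-CFF$(N,T)$ if $|X|=N$, $|\mathcal F|=T$, and for any block $B_0\in\mathcal F$ and any $r$ other blocks $A_1,\dots,A_r\in\mathcal F\setminus\{B_0\}$ we have $\left|B_0\setminus\bigcup_{j=1}^r A_j\right|>d$. *)

(* Defs.v *)
From mathcomp Require Import all_boot.
Set Implicit Arguments. Unset Strict Implicit. Unset Printing Implicit Defensive.

Definition prime_power (q : nat) : Prop :=
  exists p k : nat, prime p /\ 0 < k /\ q = p ^ k.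

Definition cff_prop (X : finType) (r d : nat) (F : {set {set X}}) : Prop :=
  forall B0 : {set X}, B0 \in F ->
  forall A : r.-tuple {set X}, (forall j : 'I_r, tnth A j \in F :\ B0) ->
  d < #|B0 :\: \bigcup_(j < r) tnth A j|.

Definition is_CFF (r d N T : nat) (X : finType) (F : {set {set X}}) : Prop :=
  #|X| = N /\ #|F| = T /\ cff_prop r d F.

(* Main.v *)
Set Warnings "-notation-overridden,-ambiguous-paths,-deprecated".
Require Import Defs.
From mathcomp Require Import all_boot.
From mathcomp Require Import ssralg poly finalg finfield.
From mathcomp Require Import zify.
Import GRing.Theory.

Section Constr.
Variables (K : finFieldType) (t : nat).
Hypothesis t_gt0 : 0 < t.

Definition Pc (c : {ffun 'I_t -> K}) : {poly K} := \poly_(i < t) odflt 0%R (omap c (insub i)).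

Definition vc (c : {ffun 'I_t -> K}) (x : option K) : K :=
  match x with Some a => horner (Pc c) a | None => nth 0%R (Pc c) t.-1 end.

Definition Bc (c : {ffun 'I_t -> K}) : {set option K * K} :=
  [set (x, vc c x) | x : option K].

Lemma card_Bc c : #|Bc c| = #|K|.+1.
Proof.
rewrite card_imset ?card_option // => x y [] //.
Qed.

Lemma size_Pc c : size (Pc c) <= t.
Proof. exact: size_poly. Qed.

Lemma inter_bound c c' : c != c' -> #|Bc c :&: Bc c'| <= t.-1.
Proof.
move=> ncc.
set S := [set x : option K | vc c x == vc c' x].
have sub : Bc c :&: Bc c' \subset [set (x, vc c x) | x in S].
  apply/subsetP=> p; rewrite inE => /andP[/imsetP[x _ ->] /imsetP[y _ [exy e]]].
  subst y; apply/imsetP; exists x => //; rewrite inE; apply/eqP; exact: e.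
apply: leq_trans (subset_leq_card sub) _.
apply: leq_trans (leq_imset_card _ _) _.
set g := (Pc c - Pc c')%R.
have gN0 : g != 0%R.
  apply: contra ncc; rewrite subr_eq0 => /eqP e; apply/eqP/ffunP => i.
  have := congr1 (fun p : {poly K} => nth 0%R p i) e; by rewrite /Pc !coef_poly ltn_ord valK.
set R := [set a : K | root g a].
have cR : #|R| < size g.
  rewrite cardE; apply: max_poly_roots => //; last exact: enum_uniq.
  by apply/allP => a; rewrite mem_enum inE.
have sg : size g <= t by rewrite (leq_trans (size_polyD _ _)) // geq_max size_polyN !size_Pc.
have SS : S \subset (Some @: R) :|: (if nth 0%R g t.-1 == 0%R then [set None] else set0).
  apply/subsetP => x; rewrite inE; case: x => [a|] /= /eqP e.
    by rewrite inE; apply/orP; left; apply/imsetP; exists a => //; rewrite inE /root /g hornerD hornerN e subrr.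
  by rewrite /g coefB e GRing.subrr eqxx in_setU set11 orbT.
apply: leq_trans (subset_leq_card SS) _.
rewrite (leq_trans (leq_card_setU _ _)) //.
rewrite card_imset; last by move=> a b [].
case: eqP => [g0|g0]; last by rewrite cards0 addn0 -ltnS prednK // (leq_trans cR).
rewrite cards1 addn1.
have : size g != t.
  apply/eqP => st; move: g0; rewrite -[t.-1]/(t.-1) -st -lead_coefE => /eqP.
  by rewrite lead_coef_eq0 (negbTE gN0).
move=> nt.
have : size g <= t.-1 by rewrite -ltnS prednK // ltn_neqAle nt sg.
move=> h; apply: leq_trans h; exact: cR.
Qed.
End Constr.

Lemma card_inter_bigcup (T : finType) (B : {set T}) r (A : 'I_r -> {set T}) :
  #|B :&: \bigcup_(j < r) A j| <= \sum_(j < r) #|B :&: A j|.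
Proof.
apply: (big_ind2 (fun X n => #|B :&: X| <= n)).
- by rewrite setI0 cards0.
- move=> X m Y n hX hY; rewrite setIUr (leq_trans (leq_card_setU _ _)) //.
  exact: leq_add.
- by [].
Qed.

Theorem mainTheorem5 (q t d : nat) :
  prime_power q -> 2 <= t -> t < q -> d <= q ->
  exists (X : finType) (F : {set {set X}}),
    is_CFF ((q - d) %/ (t - 1)) d (q ^ 2 + q) (q ^ t) F.
Proof.
move=> [p [k [pp [k0 ->]]]] t2 tq dq.
have [K _ cK] := pPrimePowerField pp k0.
have t0 : 0 < t by apply: leq_trans t2.
set r := (_ %/ _).
exists (option K * K)%type, [set @Bc K t c | c : {ffun 'I_t -> K}].
have injB : injective (@Bc K t).
  move=> c c' e; apply/eqP; apply/negP => /negP ncc.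
  have := @inter_bound K t t0 _ _ ncc; rewrite e setIid card_Bc cK; lia.
split; first by rewrite card_prod card_option cK; lia.
split; first by rewrite card_imset // card_ffun card_ord cK.
move=> B0 /imsetP[c0 _ ->] A hA.
have hI : forall j : 'I_r, #|@Bc K t c0 :&: tnth A j| <= t.-1.
  move=> j; have := hA j; rewrite in_setD1 => /andP[ne /imsetP[cj _ ecj]].
  rewrite ecj setIC; apply: (@inter_bound K t t0) => //; apply: contra ne; rewrite ecj.
  by move=> /eqP ->.
have h1 := @card_inter_bigcup _ (@Bc K t c0) r (fun j => tnth A j).
have h2 : \sum_(j < r) #|@Bc K t c0 :&: tnth A j| <= r * t.-1.
  by rewrite -[r in r * _]card_ord -sum_nat_const; apply: leq_sum => j _; exact: hI j.
have h3 : r * (t - 1) <= p ^ k - d by apply: leq_trunc_div.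
have h4 := cardsID (\bigcup_(j < r) tnth A j) (@Bc K t c0).
rewrite card_Bc cK in h4.
have : t.-1 = t - 1 by lia.
move=> ht; rewrite ht in h2.
lia.
Qed.
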